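(* For any solution as in the context, $$e^{\mu(t,\theta)-\lambda(t,\theta)}\le e^{\mathring\mu(\theta)-\mathring\lambda(\theta)}\frac{e^{-2\mathring\mu(\theta)}t}{e^{-2\mathring\mu(\theta)}-1+t}\le e^{|\mathring\mu(\theta)|-\mathring\lambda(\theta)},\qquad t\ge1,\ \theta\in[0,1].$$
   Context: Setting: $\mu,\lambda$ are functions of $(t,\theta)$, $t\ge1$, 1-periodic in $\theta$, and $f=f(t,\theta,w,L)\ge0$ ($w\in\mathbb R$, $L\ge0$) solve the Einstein–Vlasov system with hyperbolic symmetry in areal coordinates (metric $-e^{2\mu}dt^2+e^{2\lambda}d\theta^2+t^2(d\psi^2+\sinh^2\psi\,d\phi^2)$): $$\partial_t f+\frac{e^{\mu-\lambda}w}{\sqrt{1+w^2+L/t^2}}\partial_\theta f-\Big(\lambda_t w+e^{\mu-\lambda}\mu_\theta\sqrt{1+w^2+L/t^2}\Big)\partial_w f=0,$$ $$e^{-2\mu}(2t\lambda_t+1)-1=8\pi t^2\rho,\qquad e^{-2\mu}(2t\mu_t-1)+1=8\pi t^2 p,\qquad \mu_\theta=-4\pi t e^{\mu+\lambda}j,$$ $$e^{-2\lambda}\big(\mu_{\theta\theta}+\mu_\theta(\mu_\theta-\lambda_\theta)\big)-e^{-2\mu}\big(\lambda_{tt}+(\lambda_t+1/t)(\lambda_t-\mu_t)\big)=4\pi q,$$ with $\rho=\frac{\pi}{t^2}\int_{-\infty}^\infty\int_0^\infty\sqrt{1+w^2+L/t^2}\,f\,dL\,dw$, $p=\frac{\pi}{t^2}\int\int\frac{w^2}{\sqrt{1+w^2+L/t^2}}f\,dL\,dw$,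 $j=\frac{\pi}{t^2}\int\int wf\,dL\,dw$, $q=\frac{\pi}{t^4}\int\int\frac{L}{\sqrt{1+w^2+L/t^2}}f\,dL\,dw$. Initial data at $t=1$: $\mathring f,\mathring\lambda,\mathring\mu$, $C^1$, 1-periodic, $\mathring f$ compactly supported in $(w,L)$, satisfying the constraint at $t=1$; the $C^1$ solution exists for all $t\ge1$. *)

(* Defs.v *)
From Stdlib Require Import Reals.
From Coquelicot Require Import Coquelicot.
Open Scope R_scope.

Definition dt2 (u : R -> R -> R) (t th : R) : R := Derive (fun s => u s th) t.
Definition dth2 (u : R -> R -> R) (t th : R) : R := Derive (fun r => u t r) th.
Definition dtt2 (u : R -> R -> R) (t th : R) : R := Derive (fun s => dt2 u s th) t.
Definition dthth2 (u : R -> R -> R) (t th : R) : R := Derive (fun r => dth2 u t r) th.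

Definition dt4 (f : R -> R -> R -> R -> R) t th w L := Derive (fun s => f s th w L) t.
Definition dth4 (f : R -> R -> R -> R -> R) t th w L := Derive (fun s => f t s w L) th.
Definition dw4 (f : R -> R -> R -> R -> R) t th w L := Derive (fun s => f t th s L) w.
Definition dL4 (f : R -> R -> R -> R -> R) t th w L := Derive (fun s => f t th w s) L.

Definition unc2 (u : R -> R -> R) (x : R * R) : R := u (fst x) (snd x).
Definition unc4 (f : R -> R -> R -> R -> R) (x : R * R * R * R) : R :=
  f (fst (fst (fst x))) (snd (fst (fst x))) (snd (fst x)) (snd x).
Definition unc3 (g : R -> R -> R -> R) (x : R * R * R) : R :=
  g (fst (fst x)) (snd (fst x)) (snd x).

Definition C1_2 (u : R -> R -> R) : Prop :=
  forall t th, 1 < t ->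
    ex_derive (fun s => u s th) t /\ ex_derive (fun r => u t r) th /\
    continuous (unc2 u) (t, th) /\
    continuous (unc2 (dt2 u)) (t, th) /\ continuous (unc2 (dth2 u)) (t, th).

Definition C1_4 (f : R -> R -> R -> R -> R) : Prop :=
  forall t th w L, 1 < t ->
    ex_derive (fun s => f s th w L) t /\ ex_derive (fun s => f t s w L) th /\
    ex_derive (fun s => f t th s L) w /\ ex_derive (fun s => f t th w s) L /\
    continuous (unc4 f) (t, th, w, L) /\
    continuous (unc4 (dt4 f)) (t, th, w, L) /\ continuous (unc4 (dth4 f)) (t, th, w, L) /\
    continuous (unc4 (dw4 f)) (t, th, w, L) /\ continuous (unc4 (dL4 f)) (t, th, w, L).

Definition cont_up_to_1_2 (u : R -> R -> R) : Prop :=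
  forall x : R * R, 1 <= fst x ->
    filterlim (unc2 u) (within (fun y : R * R => 1 <= fst y) (locally x)) (locally (unc2 u x)).
Definition cont_up_to_1_4 (f : R -> R -> R -> R -> R) : Prop :=
  forall x : R * R * R * R, 1 <= fst (fst (fst x)) ->
    filterlim (unc4 f) (within (fun y : R * R * R * R => 1 <= fst (fst (fst y))) (locally x))
      (locally (unc4 f x)).

Definition C1_1 (g : R -> R) : Prop :=
  forall x, ex_derive g x /\ continuous g x /\ continuous (Derive g) x.
Definition C1_3 (g : R -> R -> R -> R) : Prop :=
  forall th w L,
    ex_derive (fun s => g s w L) th /\ ex_derive (fun s => g th s L) w /\
    ex_derive (fun s => g th w s) L /\
    continuous (unc3 g) (th, w, L) /\
    continuous (unc3 (fun a b c => Derive (fun s => g s b c) a)) (th, w, L) /\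
    continuous (unc3 (fun a b c => Derive (fun s => g a s c) b)) (th, w, L) /\
    continuous (unc3 (fun a b c => Derive (fun s => g a b s) c)) (th, w, L).

(* vint g v  :<->  \int_{-oo}^{oo} \int_0^{oo} g w L dL dw  converges (as improper
   Riemann integrals) and equals v *)
Definition vint (g : R -> R -> R) (v : R) : Prop :=
  exists inner : R -> R,
    (forall w, is_RInt_gen (fun L => g w L) (at_point 0) (Rbar_locally p_infty) (inner w)) /\
    is_RInt_gen inner (Rbar_locally m_infty) (Rbar_locally p_infty) v.

(* rho, p, j, q of a distribution function g = f(t,theta,.,.) at time t *)
Definition matter (g : R -> R -> R) (t rho p j q : R) : Prop :=
  exists Irho Ip Ij Iq : R,
    vint (fun w L => sqrt (1 + w ^ 2 + L / t ^ 2) * g w L) Irho /\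
    vint (fun w L => w ^ 2 / sqrt (1 + w ^ 2 + L / t ^ 2) * g w L) Ip /\
    vint (fun w L => w * g w L) Ij /\
    vint (fun w L => L / sqrt (1 + w ^ 2 + L / t ^ 2) * g w L) Iq /\
    rho = PI / t ^ 2 * Irho /\ p = PI / t ^ 2 * Ip /\
    j = PI / t ^ 2 * Ij /\ q = PI / t ^ 4 * Iq.

Definition EV_solution (mu lam : R -> R -> R) (f : R -> R -> R -> R -> R)
    (mu0 lam0 : R -> R) (f0 : R -> R -> R -> R) : Prop :=
  C1_1 mu0 /\ C1_1 lam0 /\ C1_3 f0 /\
  (forall th, mu0 (th + 1) = mu0 th /\ lam0 (th + 1) = lam0 th) /\
  (forall th w L, f0 (th + 1) w L = f0 th w L) /\
  (forall th w L, 0 <= f0 th w L) /\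
  (exists W, forall th w L, f0 th w L <> 0 -> Rabs w <= W /\ Rabs L <= W) /\
  (forall th, exists rho p j q, matter (f0 th) 1 rho p j q /\
      Derive mu0 th = - 4 * PI * 1 * exp (mu0 th + lam0 th) * j) /\
  (forall th, mu 1 th = mu0 th /\ lam 1 th = lam0 th) /\
  (forall th w L, f 1 th w L = f0 th w L) /\
  C1_2 mu /\ C1_2 lam /\ C1_4 f /\
  cont_up_to_1_2 mu /\ cont_up_to_1_2 lam /\ cont_up_to_1_4 f /\
  (forall t th, 1 <= t -> mu t (th + 1) = mu t th /\ lam t (th + 1) = lam t th) /\
  (forall t th w L, 1 <= t -> f t (th + 1) w L = f t th w L) /\
  (forall t th w L, 1 <= t -> 0 <= f t th w L) /\
  (forall t th w L, 1 < t -> 0 <= L ->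
     dt4 f t th w L
     + exp (mu t th - lam t th) * w / sqrt (1 + w ^ 2 + L / t ^ 2) * dth4 f t th w L
     - (dt2 lam t th * w
        + exp (mu t th - lam t th) * dth2 mu t th * sqrt (1 + w ^ 2 + L / t ^ 2))
       * dw4 f t th w L = 0) /\
  (forall t th, 1 < t ->
     ex_derive (fun s => dt2 lam s th) t /\ ex_derive (fun r => dth2 mu t r) th /\
     exists rho p j q, matter (f t th) t rho p j q /\
       exp (- 2 * mu t th) * (2 * t * dt2 lam t th + 1) - 1 = 8 * PI * t ^ 2 * rho /\
       exp (- 2 * mu t th) * (2 * t * dt2 mu t th - 1) + 1 = 8 * PI * t ^ 2 * p /\
       dth2 mu t th = - 4 * PI * t * exp (mu t th + lam t th) * j /\
       exp (- 2 * lam t th) * (dthth2 mu t th + dth2 mu t th * (dth2 mu t th - dth2 lam t th))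
       - exp (- 2 * mu t th) * (dtt2 lam t th
            + (dt2 lam t th + 1 / t) * (dt2 lam t th - dt2 mu t th))
       = 4 * PI * q).

(* Main.v *)
Require Import Defs.
From Stdlib Require Import Reals Lra.
From Coquelicot Require Import Coquelicot.
Open Scope R_scope.

Lemma nonincr (g : R -> R) (a b : R) : a <= b ->
 (forall x, a < x <= b -> ex_derive g x) ->
 (forall x, a < x < b -> Derive g x <= 0) ->
 continuous (fun s => g (Rmax a s)) a -> g b <= g a.
Proof.
  intros Hab Hd Hn Hc.
  destruct (Req_dec a b) as [->|Hne]; [lra|].
  set (G := fun s => g (Rmax a s)).
  assert (Hloc : forall x, a < x -> locally x (fun y => g y = G y)).
  { intros x Hx. exists (mkposreal (x - a) ltac:(lra)). intros y Hy.
    unfold G. rewrite Rmax_right; auto.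
    change (Rabs (y - x) < x - a) in Hy. apply Rabs_def2 in Hy. lra. }
  destruct (MVT_gen G a b (fun x => Rmin (Derive g x) 0)) as [c [Hc' He]].
  - intros x Hx. rewrite Rmin_left in Hx by lra. rewrite Rmax_right in Hx by lra.
    rewrite Rmin_left by (apply Hn; lra).
    apply is_derive_ext_loc with g. apply Hloc; lra.
    apply Derive_correct, Hd; lra.
  - intros x Hx. rewrite Rmin_left in Hx by lra. rewrite Rmax_right in Hx by lra.
    apply continuity_pt_filterlim.
    destruct (Req_dec x a) as [->|Hxa]. exact Hc.
    apply (continuous_ext_loc _ g). apply Hloc; lra.
    apply (ex_derive_continuous (K:=R_AbsRing) (V:=R_NormedModule) g x), Hd; lra.
  - unfold G in He. rewrite Rmax_right in He by lra. rewrite Rmax_right in He by lra.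
    assert (Rmin (Derive g c) 0 <= 0) by apply Rmin_r.
    assert (Rmin (Derive g c) 0 * (b - a) <= 0).
    { apply Rmult_le_0_r; lra. }
    lra.
Qed.

Lemma cont_max (u : R -> R -> R) th : cont_up_to_1_2 u ->
  continuous (fun s => u (Rmax 1 s) th) 1.
Proof.
  intros H. specialize (H (1, th) (Rle_refl 1)).
  intros P HP. specialize (H P).
  replace (Rmax 1 1) with 1 in HP by (rewrite Rmax_left; lra).
  destruct (H HP) as [eps He].
  exists eps. intros s Hs. apply (He (Rmax 1 s, th)).
  - split; simpl.
    + change (Rabs (Rmax 1 s - 1) < eps). change (Rabs (s - 1) < eps) in Hs.
      unfold Rmax; destruct (Rle_dec 1 s); [exact Hs|].
      rewrite Rminus_diag, Rabs_R0. apply cond_pos.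
    + apply ball_center.
  - simpl. apply Rmax_l.
Qed.

Lemma cont_rmax x : continuous (fun s => Rmax 1 s) x.
Proof.
  intros P [eps He]. exists eps. intros s Hs. apply He.
  change (Rabs (Rmax 1 s - Rmax 1 x) < eps). change (Rabs (s - x) < eps) in Hs.
  apply Rabs_def2 in Hs. apply Rabs_def1; unfold Rmax;
  destruct (Rle_dec 1 s); destruct (Rle_dec 1 x); lra.
Qed.

Lemma vint_le h1 h2 v1 v2 : vint h1 v1 -> vint h2 v2 ->
  (forall w L, 0 <= L -> Rabs (h2 w L) <= h1 w L) -> Rabs v2 <= v1.
Proof.
  intros [i1 [Hi1 Ho1]] [i2 [Hi2 Ho2]] H.
  assert (Hin : forall w, Rabs (i2 w) <= i1 w).
  { intros w.
    apply (RInt_gen_norm (Fa := at_point 0) (Fb := Rbar_locally p_infty)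
             (fun L => h2 w L) (fun L => h1 w L)); try apply at_point_filter;
      try apply Rbar_locally_filter; auto.
    - apply (Filter_prod _ _ _ (fun x => x = 0) (fun y => 0 < y)).
      reflexivity. exists 0; auto. intros x y -> Hy; simpl; lra.
    - apply (Filter_prod _ _ _ (fun x => x = 0) (fun y => 0 < y)).
      reflexivity. exists 0; auto. intros x y -> Hy z Hz; simpl in Hz.
      apply H; lra. }
  apply (RInt_gen_norm (Fa := Rbar_locally m_infty) (Fb := Rbar_locally p_infty)
           i2 i1); try apply Rbar_locally_filter; auto.
  - apply (Filter_prod _ _ _ (fun x => x < 0) (fun y => 0 < y)).
    exists 0; auto. exists 0; auto. intros x y Hx Hy; simpl; lra.
  - apply (Filter_prod _ _ _ (fun x => x < 0) (fun y => 0 < y)).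
    exists 0; auto. exists 0; auto. intros x y Hx Hy z Hz. apply Hin.
Qed.

Lemma matter_p (g : R -> R -> R) t rho p j q : 0 < t -> (forall w L, 0 <= g w L) ->
  matter g t rho p j q -> 0 <= p <= rho.
Proof.
  intros Ht Hg (Ir & Ip & Ij & Iq & Hr & Hp & _ & _ & -> & -> & _ & _).
  assert (HS : forall w L, 0 <= L -> 1 <= 1 + w ^ 2 + L / t ^ 2).
  { intros w L HL. assert (0 <= L / t^2) by (apply Rdiv_le_0_compat; [lra| apply pow_lt; lra]).
    assert (0 <= w^2) by (apply pow2_ge_0). lra. }
  assert (H1 : Rabs Ip <= Ip).
  { apply (vint_le _ _ _ _ Hp Hp). intros w L HL. rewrite Rabs_right. lra.
    apply Rle_ge, Rmult_le_pos; auto. apply Rdiv_le_0_compat. apply pow2_ge_0.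
    apply sqrt_lt_R0. specialize (HS w L HL). lra. }
  assert (H2 : Rabs Ip <= Ir).
  { apply (vint_le _ _ _ _ Hr Hp). intros w L HL.
    specialize (HS w L HL). set (S := 1 + w ^ 2 + L / t ^ 2) in *.
    assert (Hs : 0 < sqrt S) by (apply sqrt_lt_R0; lra).
    assert (Hss : sqrt S * sqrt S = S) by (apply sqrt_sqrt; lra).
    assert (Hle : w ^ 2 / sqrt S <= sqrt S).
    { apply (Rmult_le_reg_r (sqrt S)); auto. unfold Rdiv. rewrite Rmult_assoc, Rinv_l by lra.
      rewrite Hss. unfold S in *. assert (0 <= L / t^2) by (apply Rdiv_le_0_compat; [lra| apply pow_lt; lra]). lra. }
    assert (0 <= w ^ 2 / sqrt S) by (apply Rdiv_le_0_compat; [apply pow2_ge_0|lra]).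
    rewrite Rabs_right. apply Rmult_le_compat_r; auto.
    apply Rle_ge, Rmult_le_pos; auto. }
  assert (0 < PI / t ^ 2) by (apply Rdiv_lt_0_compat; [apply PI_RGT_0| apply pow_lt; lra]).
  assert (0 <= Rabs Ip) by apply Rabs_pos. pose proof (Rle_abs Ip).
  split. apply Rmult_le_pos; lra. apply Rmult_le_compat_l; lra.
Qed.

Lemma expmono x y : x <= y -> exp x <= exp y.
Proof. intros H. destruct (Rle_lt_or_eq_dec _ _ H) as [H' | ->].
  left; apply exp_increasing; auto. right; reflexivity. Qed.

Theorem mainTheorem4 (mu lam : R -> R -> R) (f : R -> R -> R -> R -> R)
    (mu0 lam0 : R -> R) (f0 : R -> R -> R -> R) :
  EV_solution mu lam f mu0 lam0 f0 ->
  forall t th, 1 <= t -> 0 <= th <= 1 ->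
    exp (mu t th - lam t th)
      <= exp (mu0 th - lam0 th)
         * (exp (- 2 * mu0 th) * t / (exp (- 2 * mu0 th) - 1 + t)) /\
    exp (mu0 th - lam0 th)
         * (exp (- 2 * mu0 th) * t / (exp (- 2 * mu0 th) - 1 + t))
      <= exp (Rabs (mu0 th) - lam0 th).
Proof.
  intros (_ & _ & _ & _ & _ & _ & _ & _ & Hinit & _ & Cmu & Clam & _ & Kmu & Klam & _
          & _ & _ & Hfpos & _ & Hfield) t th Ht _.
  destruct (Hinit th) as [Hm1 Hl1].
  set (A0 := exp (-2 * mu0 th)).
  assert (HA0 : 0 < A0) by apply exp_pos.
  assert (Hfx : forall x, 1 < x -> exists p rho,
     0 <= p <= rho /\
     exp (- 2 * mu x th) * (2 * x * dt2 lam x th + 1) - 1 = 8 * PI * x ^ 2 * rho /\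
     exp (- 2 * mu x th) * (2 * x * dt2 mu x th - 1) + 1 = 8 * PI * x ^ 2 * p).
  { intros x Hx. destruct (Hfield x th Hx) as (_ & _ & rho & p & j & q & Hm & E1 & E2 & _).
    exists p, rho. split; [|split; auto].
    apply (matter_p (f x th) x rho p j q); [lra| |auto]. intros w L; apply Hfpos; lra. }
  assert (Hdmu : forall x, 1 < x -> ex_derive (fun s => mu s th) x)
    by (intros x Hx; apply (Cmu x th Hx)).
  assert (Hdlam : forall x, 1 < x -> ex_derive (fun s => lam s th) x)
    by (intros x Hx; apply (Clam x th Hx)).
  assert (C1 : forall s, 1 <= s -> s * exp (-2 * mu s th) - s <= A0 - 1).
  { intros s Hs.
    assert (Hd : forall x, 1 < x -> is_derive (fun s => s * exp (-2 * mu s th) - s) x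
       (exp (-2 * mu x th) + x * (exp (-2 * mu x th) * (-2 * dt2 mu x th)) - 1)).
    { intros x Hx. auto_derive. apply Hdmu; lra. unfold dt2. ring. }
    replace (A0 - 1) with (1 * exp (-2 * mu 1 th) - 1) by (rewrite Hm1; unfold A0; ring).
    apply (nonincr (fun s => s * exp (-2 * mu s th) - s)); auto.
    - intros x Hx. eexists. apply Hd. lra.
    - intros x Hx.
      assert (HH : Derive (fun s => s * exp (-2 * mu s th) - s) x =
        exp (-2 * mu x th) + x * (exp (-2 * mu x th) * (-2 * dt2 mu x th)) - 1)
        by (apply is_derive_unique, Hd; lra). rewrite HH.
      destruct (Hfx x ltac:(lra)) as (p & rho & Hp & _ & E2).
      assert (0 <= 8 * PI * x ^ 2 * p).
      { apply Rmult_le_pos; [|lra]. apply Rmult_le_pos; [pose proof PI_RGT_0; lra|].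
        apply pow2_ge_0. }
      lra.
    - pose proof (cont_max mu th Kmu) as cM.
      exact (continuous_minus (fun s => Rmax 1 s * exp (-2 * mu (Rmax 1 s) th))
               (fun s => Rmax 1 s) 1
               (continuous_mult _ _ 1 (cont_rmax 1)
                  (continuous_comp (fun s => -2 * mu (Rmax 1 s) th) exp 1
                     (continuous_mult (fun _ => -2) _ 1 (continuous_const _ _) cM)
                     (continuous_exp _)))
               (cont_rmax 1)). }
  assert (C2 : mu t th - lam t th - ln t + ln (A0 - 1 + t) <= mu0 th - lam0 th + ln A0).
  { assert (Hd : forall x, 1 < x -> is_derive
       (fun s => mu s th - lam s th - ln s + ln (A0 - 1 + s)) x
       (dt2 mu x th - dt2 lam x th - / x + / (A0 - 1 + x))).
    { intros x Hx. auto_derive. repeat split; try apply Hdmu; try apply Hdlam; lra.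
      unfold dt2. ring. }
    replace (mu0 th - lam0 th + ln A0) with
      (mu 1 th - lam 1 th - ln 1 + ln (A0 - 1 + 1))
      by (rewrite Hm1, Hl1, ln_1; replace (A0 - 1 + 1) with A0 by ring; ring).
    apply (nonincr (fun s => mu s th - lam s th - ln s + ln (A0 - 1 + s))); auto.
    - intros x Hx. eexists. apply Hd. lra.
    - intros x Hx.
      assert (HH : Derive (fun s => mu s th - lam s th - ln s + ln (A0 - 1 + s)) x =
        dt2 mu x th - dt2 lam x th - / x + / (A0 - 1 + x))
        by (apply is_derive_unique, Hd; lra). rewrite HH.
      destruct (Hfx x ltac:(lra)) as (p & rho & Hp & E1 & E2).
      pose proof (C1 x ltac:(lra)) as Hc.
      set (A := exp (-2 * mu x th)) in *.
      assert (HA : 0 < A) by apply exp_pos.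
      set (X := dt2 mu x th - dt2 lam x th).
      assert (HX : 2 * x * A * X <= 2 * A - 2).
      { assert (8 * PI * x ^ 2 * p <= 8 * PI * x ^ 2 * rho).
        { apply Rmult_le_compat_l; [|lra]. apply Rmult_le_pos; [pose proof PI_RGT_0; lra|].
          apply pow2_ge_0. }
        unfold X. nra. }
      set (D := A0 - 1 + x).
      assert (HD : 0 < D) by (unfold D; lra).
      assert (HxAX : x * A * X <= A - 1) by lra.
      assert (x * A * D * X <= (A - 1) * D).
      { replace (x * A * D * X) with (D * (x * A * X)) by ring.
        replace ((A - 1) * D) with (D * (A - 1)) by ring.
        apply Rmult_le_compat_l; lra. }
      assert (Hgoal : x * A * D * (X - / x + / D) <= 0).
      { replace (x * A * D * (X - / x + / D)) with (x * A * D * X - A * D + x * A)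
          by (field; lra).
        unfold D in *. lra. }
      assert (0 < x * A * D) by (apply Rmult_lt_0_compat; [apply Rmult_lt_0_compat|]; lra).
      destruct (Rle_lt_dec (X - / x + / D) 0) as [?|Hc']; [exact r|].
      exfalso. assert (0 < x * A * D * (X - / x + / D)) by (apply Rmult_lt_0_compat; lra).
      lra.
    - pose proof (cont_max mu th Kmu) as cM.
      pose proof (cont_max lam th Klam) as cL.
      assert (Hr : Rmax 1 1 = 1) by (apply Rmax_left; lra).
      apply (continuous_plus (fun s => mu (Rmax 1 s) th - lam (Rmax 1 s) th - ln (Rmax 1 s))
               (fun s => ln (A0 - 1 + Rmax 1 s))).
      + apply (continuous_minus (fun s => mu (Rmax 1 s) th - lam (Rmax 1 s) th)
               (fun s => ln (Rmax 1 s))).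
        * exact (continuous_minus _ _ 1 cM cL).
        * apply (continuous_comp (fun s => Rmax 1 s) ln). apply cont_rmax.
          rewrite Hr. apply continuous_ln; lra.
      + apply (continuous_comp (fun s => A0 - 1 + Rmax 1 s) ln).
        * apply (continuous_plus (fun _ => A0 - 1) (fun s => Rmax 1 s)).
          apply continuous_const. apply cont_rmax.
        * rewrite Hr. apply continuous_ln; lra. }
  assert (HD : 0 < A0 - 1 + t) by lra.
  assert (Ht0 : 0 < t) by lra.
  split.
  - assert (Hle : mu t th - lam t th <= (mu0 th - lam0 th) + ln (A0 * t / (A0 - 1 + t))).
    { rewrite ln_div, ln_mult by (try apply Rmult_lt_0_compat; lra). lra. }
    assert (Hpos : 0 < A0 * t / (A0 - 1 + t))
      by (apply Rdiv_lt_0_compat; [apply Rmult_lt_0_compat|]; lra).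
    rewrite <- (exp_ln _ Hpos), <- exp_plus.
    apply expmono. exact Hle.
  - pose proof (exp_pos (mu0 th - lam0 th)) as He.
    destruct (Rle_or_lt 0 (mu0 th)) as [Hu|Hu].
    + rewrite Rabs_right by lra.
      assert (A0 <= 1).
      { unfold A0. rewrite <- exp_0. apply expmono. lra. }
      assert (A0 * t / (A0 - 1 + t) <= 1).
      { apply (Rmult_le_reg_r (A0 - 1 + t)); auto. unfold Rdiv.
        rewrite Rmult_assoc, Rinv_l by lra. nra. }
      assert (exp (mu0 th - lam0 th) * (A0 * t / (A0 - 1 + t)) <= exp (mu0 th - lam0 th) * 1)
        by (apply Rmult_le_compat_l; lra).
      lra.
    + rewrite Rabs_left by lra.
      assert (1 <= A0).
      { unfold A0. rewrite <- exp_0. apply expmono. lra. }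
      assert (A0 * t / (A0 - 1 + t) <= A0).
      { apply (Rmult_le_reg_r (A0 - 1 + t)); auto. unfold Rdiv.
        rewrite Rmult_assoc, Rinv_l by lra. nra. }
      assert (exp (mu0 th - lam0 th) * (A0 * t / (A0 - 1 + t)) <= exp (mu0 th - lam0 th) * A0)
        by (apply Rmult_le_compat_l; lra).
      replace (exp (- mu0 th - lam0 th)) with (exp (mu0 th - lam0 th) * A0); [lra|].
      unfold A0. rewrite <- exp_plus. f_equal. ring.
Qed.
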